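(* For all complex $q$ with $|q|<1$, $$F^{\rm od}_{\rm ed}(q)=\frac{q\,(-q;q^2)_\infty}{1-q}\left(1-\frac{(-q^2;q^2)_\infty}{(-q;q^2)_\infty}\right).$$
   Context: For $n\in\mathbb N_0\cup\{\infty\}$, $(a;q)_n:=\prod_{j=0}^{n-1}(1-aq^j)$. Define $$F^{\rm od}_{\rm ed}(q):=\sum_{n=0}^\infty q^{2n+2}(-q^2;q^2)_n(-q^{2n+3};q^2)_\infty,$$ the generating function for partitions into at least one even part, with even parts distinct, and odd parts distinct and all larger than every even part. *)

(* Defs.v *)
From Stdlib Require Import Reals ClassicalEpsilon.
Open Scope R_scope.

Definition Cx : Type := (R * R)%type.
Definition Czero : Cx := (0, 0).
Definition Cone : Cx := (1, 0).
Definition Cadd (z w : Cx) : Cx := (fst z + fst w, snd z + snd w).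
Definition Copp (z : Cx) : Cx := (- fst z, - snd z).
Definition Csub (z w : Cx) : Cx := Cadd z (Copp w).
Definition Cmul (z w : Cx) : Cx :=
  (fst z * fst w - snd z * snd w, fst z * snd w + snd z * fst w).
Definition Cinv (z : Cx) : Cx :=
  (fst z / (fst z ^ 2 + snd z ^ 2), - snd z / (fst z ^ 2 + snd z ^ 2)).
Definition Cdiv (z w : Cx) : Cx := Cmul z (Cinv w).
Definition Cnorm (z : Cx) : R := sqrt (fst z ^ 2 + snd z ^ 2).
Fixpoint Cpow (z : Cx) (n : nat) : Cx :=
  match n with O => Cone | S m => Cmul z (Cpow z m) end.

(* Convergence of a complex sequence, and its limit (junk value if none). *)
Definition Ccv (u : nat -> Cx) (l : Cx) : Prop :=
  forall eps : R, 0 < eps -> exists N : nat, forall n : nat, (n >= N)%nat ->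
    Cnorm (Csub (u n) l) < eps.
Definition Clim (u : nat -> Cx) : Cx := epsilon (A := Cx) (inhabits Czero) (fun l => Ccv u l).

Fixpoint Csum (f : nat -> Cx) (n : nat) : Cx :=
  match n with O => Czero | S m => Cadd (Csum f m) (f m) end.

Fixpoint qpoch (a q : Cx) (n : nat) : Cx :=
  match n with O => Cone | S m => Cmul (qpoch a q m) (Csub Cone (Cmul a (Cpow q m))) end.
Definition qpoch_inf (a q : Cx) : Cx := Clim (fun n => qpoch a q n).

Definition Fod_ed_term (q : Cx) (n : nat) : Cx :=
  Cmul (Cpow q (2 * n + 2))
       (Cmul (qpoch (Copp (Cpow q 2)) (Cpow q 2) n)
             (qpoch_inf (Copp (Cpow q (2 * n + 3))) (Cpow q 2))).

(* Main.v *)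
Require Import Defs.
From Stdlib Require Import Reals Lra Lia Psatz ClassicalEpsilon.
From Coquelicot Require Complex.
Open Scope R_scope.

Lemma Cx_ring : ring_theory Czero Cone Cadd Cmul Csub Copp (@eq Cx).
Proof.
  constructor; intros; repeat match goal with z : Cx |- _ => destruct z end;
  unfold Csub; unfold Cadd, Cmul, Copp, Czero, Cone; simpl; f_equal; ring.
Qed.
Add Ring CxRing : Cx_ring.

Lemma Cnorm_mul z w : Cnorm (Cmul z w) = Cnorm z * Cnorm w.
Proof. exact (Complex.Cmod_mult z w). Qed.
Lemma Cnorm_add z w : Cnorm (Cadd z w) <= Cnorm z + Cnorm w.
Proof. exact (Complex.Cmod_triangle z w). Qed.
Lemma Cnorm_opp z : Cnorm (Copp z) = Cnorm z.
Proof. exact (Complex.Cmod_opp z). Qed.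
Lemma Cnorm_ge0 z : 0 <= Cnorm z.
Proof. apply sqrt_pos. Qed.
Lemma Cnorm_one : Cnorm Cone = 1.
Proof. exact Complex.Cmod_1. Qed.
Lemma Cnorm_sub z w : Cnorm (Csub z w) <= Cnorm z + Cnorm w.
Proof. unfold Csub. rewrite <- (Cnorm_opp w). apply Cnorm_add. Qed.
Lemma Cnorm_sub_sym z w : Cnorm (Csub z w) = Cnorm (Csub w z).
Proof.
  replace (Csub z w) with (Copp (Csub w z)) by ring. apply Cnorm_opp.
Qed.
Lemma Cnorm_pow z n : Cnorm (Cpow z n) = Cnorm z ^ n.
Proof.
  induction n; simpl. apply Cnorm_one. rewrite Cnorm_mul, IHn; auto.
Qed.
Lemma Cnorm_zero_eq z : Cnorm z = 0 -> z = Czero.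
Proof. intro H. exact (Complex.Cmod_eq_0 z H). Qed.
Lemma Cnorm_fst z : Rabs (fst z) <= Cnorm z.
Proof. pose proof (Complex.Rmax_Cmod z). eapply Rle_trans; [apply Rmax_l|exact H]. Qed.
Lemma Cnorm_snd z : Rabs (snd z) <= Cnorm z.
Proof. pose proof (Complex.Rmax_Cmod z). eapply Rle_trans; [apply Rmax_r|exact H]. Qed.
Lemma Cnorm_le_sum z : Cnorm z <= Rabs (fst z) + Rabs (snd z).
Proof.
  destruct z as [a b]. unfold Cnorm; simpl fst; simpl snd.
  pose proof (Rabs_pos a); pose proof (Rabs_pos b).
  rewrite <- (sqrt_pow2 (Rabs a + Rabs b)) by lra.
  apply sqrt_le_1_alt.
  rewrite <- (pow2_abs a), <- (pow2_abs b). nra.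
Qed.
Lemma Cnorm_tri3 a b c : Cnorm (Csub a c) <= Cnorm (Csub a b) + Cnorm (Csub b c).
Proof.
  replace (Csub a c) with (Cadd (Csub a b) (Csub b c)) by ring. apply Cnorm_add.
Qed.

Lemma Cinv_r z : z <> Czero -> Cmul z (Cinv z) = Cone.
Proof.
  destruct z as [a b]; intro H. unfold Cmul, Cinv, Cone; simpl.
  assert (a ^ 2 + b ^ 2 <> 0).
  { intro E. apply H. assert (a = 0) by nra. assert (b = 0) by nra. subst. reflexivity. }
  f_equal; field; simpl in *; lra.
Qed.

Lemma Cpow_add z m n : Cpow z (m + n) = Cmul (Cpow z m) (Cpow z n).
Proof. induction m; simpl. ring. rewrite IHm. ring. Qed.
Lemma Cpow_mul z m n : Cpow z (m * n) = Cpow (Cpow z m) n.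
Proof.
  revert m; induction n; intro m. rewrite Nat.mul_0_r. reflexivity.
  replace (m * S n)%nat with (m + m * n)%nat by lia. rewrite Cpow_add, IHn. reflexivity.
Qed.

Lemma Ccv_unique u l1 l2 : Ccv u l1 -> Ccv u l2 -> l1 = l2.
Proof.
  intros H1 H2.
  destruct (Req_dec (Cnorm (Csub l1 l2)) 0) as [E|E].
  - apply Cnorm_zero_eq in E. replace l1 with (Cadd (Csub l1 l2) l2) by ring.
    rewrite E. ring.
  - pose proof (Cnorm_ge0 (Csub l1 l2)).
    set (e := Cnorm (Csub l1 l2)) in *.
    destruct (H1 (e/2)) as [N1 HN1]. lra.
    destruct (H2 (e/2)) as [N2 HN2]. lra.
    assert (HN1x := HN1 (N1+N2)%nat ltac:(lia)). assert (HN2x := HN2 (N1+N2)%nat ltac:(lia)).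
    pose proof (Cnorm_tri3 l1 (u (N1+N2)%nat) l2).
    rewrite (Cnorm_sub_sym l1 (u (N1+N2)%nat)) in H0. fold e in H0. lra.
Qed.

Lemma Clim_spec u l : Ccv u l -> Clim u = l.
Proof.
  intro H. unfold Clim. apply (Ccv_unique u); [|exact H].
  apply (epsilon_spec (inhabits Czero) (fun l => Ccv u l)). exists l; exact H.
Qed.

Lemma Ccv_ext u v l : (forall n, u n = v n) -> Ccv u l -> Ccv v l.
Proof. intros E H eps He. destruct (H eps He) as [N HN]. exists N. intros. rewrite <- E. auto. Qed.

Lemma Ccv_shift u l : Ccv u l -> Ccv (fun n => u (S n)) l.
Proof. intros H eps He. destruct (H eps He) as [N HN]. exists N. intros. apply HN; lia. Qed.

Lemma Ccv_scal c u l : Ccv u l -> Ccv (fun n => Cmul c (u n)) (Cmul c l).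
Proof.
  intros H eps He. pose proof (Cnorm_ge0 c).
  destruct (H (eps / (Cnorm c + 1))) as [N HN].
  { apply Rdiv_lt_0_compat; lra. }
  exists N. intros n Hn. specialize (HN n Hn).
  replace (Csub (Cmul c (u n)) (Cmul c l)) with (Cmul c (Csub (u n) l)) by ring.
  rewrite Cnorm_mul. pose proof (Cnorm_ge0 (Csub (u n) l)).
  apply Rle_lt_trans with ((Cnorm c + 1) * Cnorm (Csub (u n) l)). nra.
  apply Rmult_lt_reg_l with (/ (Cnorm c + 1)).
  apply Rinv_0_lt_compat; lra.
  rewrite <- Rmult_assoc, Rinv_l by lra. unfold Rdiv in HN. lra.
Qed.

Lemma Ccv_csub c u l : Ccv u l -> Ccv (fun n => Csub c (u n)) (Csub c l).
Proof.
  intros H eps He. destruct (H eps He) as [N HN]. exists N. intros n Hn.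
  replace (Csub (Csub c (u n)) (Csub c l)) with (Copp (Csub (u n) l)) by ring.
  rewrite Cnorm_opp. auto.
Qed.

Lemma Ccv_bounded u l : Ccv u l -> exists N, forall n, (n >= N)%nat -> Cnorm (u n) <= Cnorm l + 1.
Proof.
  intro H. destruct (H 1 Rlt_0_1) as [N HN]. exists N. intros n Hn.
  specialize (HN n Hn).
  replace (u n) with (Cadd (Csub (u n) l) l) by ring.
  pose proof (Cnorm_add (Csub (u n) l) l). lra.
Qed.

Lemma Ccv_mul u v l m : Ccv u l -> Ccv v m -> Ccv (fun n => Cmul (u n) (v n)) (Cmul l m).
Proof.
  intros Hu Hv eps He.
  destruct (Ccv_bounded u l Hu) as [N0 HN0].
  set (K := Cnorm l + 1 + Cnorm m + 1).
  assert (HK : 0 < K) by (unfold K; pose proof (Cnorm_ge0 l); pose proof (Cnorm_ge0 m); lra).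
  destruct (Hu (eps / K)) as [N1 HN1]. apply Rdiv_lt_0_compat; lra.
  destruct (Hv (eps / K)) as [N2 HN2]. apply Rdiv_lt_0_compat; lra.
  exists (N0 + N1 + N2)%nat. intros n Hn.
  specialize (HN0 n ltac:(lia)). specialize (HN1 n ltac:(lia)). specialize (HN2 n ltac:(lia)).
  replace (Csub (Cmul (u n) (v n)) (Cmul l m)) with
      (Cadd (Cmul (u n) (Csub (v n) m)) (Cmul (Csub (u n) l) m)) by ring.
  eapply Rle_lt_trans. apply Cnorm_add. rewrite !Cnorm_mul.
  pose proof (Cnorm_ge0 (u n)). pose proof (Cnorm_ge0 (Csub (v n) m)).
  pose proof (Cnorm_ge0 (Csub (u n) l)). pose proof (Cnorm_ge0 m).
  assert (E : eps = K * (eps / K)) by (field; lra).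
  set (d := eps / K) in *.
  assert (Cnorm (u n) * Cnorm (Csub (v n) m) <= (Cnorm l + 1) * d) by nra.
  assert (Cnorm (Csub (u n) l) * Cnorm m <= d * Cnorm m) by nra.
  assert (0 < d) by (unfold d; apply Rdiv_lt_0_compat; lra).
  assert (Cnorm m * d < (Cnorm m + 1) * d) by nra.
  unfold K in E. nra.
Qed.

Lemma Ccv_le_bound u l c b : Ccv u l -> (forall n, Cnorm (Csub (u n) c) <= b) ->
  Cnorm (Csub l c) <= b.
Proof.
  intros H Hb. apply Rnot_lt_le. intro Hlt.
  destruct (H (Cnorm (Csub l c) - b)) as [N HN]. lra.
  specialize (HN N (le_n N)). specialize (Hb N).
  pose proof (Cnorm_tri3 l (u N) c). rewrite (Cnorm_sub_sym l (u N)) in H0. lra.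
Qed.

Lemma Ccv_geom_cauchy u C rho : 0 <= rho < 1 ->
  (forall m k, Cnorm (Csub (u (m + k)%nat) (u m)) <= C * rho ^ m) ->
  exists l, Ccv u l.
Proof.
  intros Hr Hb.
  assert (HC : forall eps, 0 < eps -> exists N, forall n m, (n >= N)%nat -> (m >= N)%nat ->
             Cnorm (Csub (u n) (u m)) < eps).
  { intros eps He.
    destruct (pow_lt_1_zero rho ltac:(rewrite Rabs_right; lra) (eps / (Rabs C + 1)))
      as [N HN]. apply Rdiv_lt_0_compat; pose proof (Rabs_pos C); lra.
    exists N. intros n m Hn Hm.
    assert (key : forall a b, (a >= N)%nat -> (b >= a)%nat -> Cnorm (Csub (u b) (u a)) < eps).
    { intros a b Ha Hba. replace b with (a + (b - a))%nat by lia.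
      eapply Rle_lt_trans. apply Hb.
      specialize (HN a Ha). rewrite Rabs_right in HN by (apply Rle_ge, pow_le; lra).
      pose proof (Rabs_pos C). pose proof (pow_le rho a ltac:(lra)).
      apply Rle_lt_trans with (Rabs C * rho ^ a).
      apply Rmult_le_compat_r; auto. apply Rle_abs.
      apply Rle_lt_trans with ((Rabs C + 1) * rho ^ a). nra.
      apply Rmult_lt_reg_l with (/ (Rabs C + 1)). apply Rinv_0_lt_compat; lra.
      rewrite <- Rmult_assoc, Rinv_l by lra. unfold Rdiv in HN. lra. }
    destruct (Nat.le_ge_cases n m).
    - rewrite Cnorm_sub_sym. apply key; lia.
    - apply key; lia. }
  assert (C1 : Cauchy_crit (fun n => fst (u n))).
  { intros eps He. destruct (HC eps He) as [N HN]. exists N. intros n m Hn Hm.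
    unfold R_dist. eapply Rle_lt_trans; [|apply (HN n m Hn Hm)].
    eapply Rle_trans; [|apply Cnorm_fst]. simpl. right. f_equal. }
  assert (C2 : Cauchy_crit (fun n => snd (u n))).
  { intros eps He. destruct (HC eps He) as [N HN]. exists N. intros n m Hn Hm.
    unfold R_dist. eapply Rle_lt_trans; [|apply (HN n m Hn Hm)].
    eapply Rle_trans; [|apply Cnorm_snd]. simpl. right. f_equal. }
  destruct (R_complete _ C1) as [l1 H1]. destruct (R_complete _ C2) as [l2 H2].
  exists (l1, l2). intros eps He.
  destruct (H1 (eps/2)) as [N1 HN1]. lra. destruct (H2 (eps/2)) as [N2 HN2]. lra.
  exists (N1 + N2)%nat. intros n Hn.
  specialize (HN1 n ltac:(lia)). specialize (HN2 n ltac:(lia)). unfold R_dist in *.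
  eapply Rle_lt_trans. apply Cnorm_le_sum. simpl.
  replace (fst (u n) + - l1) with (fst (u n) - l1) by ring.
  replace (snd (u n) + - l2) with (snd (u n) - l2) by ring. lra.
Qed.

Lemma qpoch_S a p m : qpoch a p (S m) = Cmul (qpoch a p m) (Csub Cone (Cmul a (Cpow p m))).
Proof. reflexivity. Qed.

Lemma qpoch_step a p m : Cnorm (Csub (qpoch a p (S m)) (qpoch a p m)) =
   Cnorm (qpoch a p m) * (Cnorm a * Cnorm p ^ m).
Proof.
  rewrite qpoch_S.
  replace (Csub (Cmul (qpoch a p m) (Csub Cone (Cmul a (Cpow p m)))) (qpoch a p m))
    with (Copp (Cmul (qpoch a p m) (Cmul a (Cpow p m)))) by ring.
  rewrite Cnorm_opp, !Cnorm_mul, Cnorm_pow. reflexivity.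
Qed.

Lemma exp_mono x y : x <= y -> exp x <= exp y.
Proof. intro H. destruct H. left; apply exp_increasing; auto. subst; lra. Qed.

Section B.
Variables (a p : Cx).
Hypothesis hp : Cnorm p < 1.
Let rp := Cnorm p.
Let s := Cnorm a / (1 - rp).

Lemma rp_nonneg : 0 <= rp.
Proof. apply Cnorm_ge0. Qed.

Lemma qpoch_B1 m : Cnorm (qpoch a p m) <= exp s.
Proof.
  pose proof rp_nonneg as Hr. pose proof (Cnorm_ge0 a) as Ha.
  assert (G : forall m, Cnorm (qpoch a p m) <= exp (Cnorm a * (1 - rp ^ m) / (1 - rp))).
  { induction m0.
    - simpl. rewrite Cnorm_one. replace (Cnorm a * (1 - 1) / (1 - rp)) with 0 by (field; unfold rp; lra).
      rewrite exp_0. lra.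
    - rewrite qpoch_S, Cnorm_mul.
      replace (Cnorm a * (1 - rp ^ S m0) / (1 - rp)) with
        (Cnorm a * (1 - rp ^ m0) / (1 - rp) + Cnorm a * rp ^ m0)
        by (simpl; field; unfold rp; lra).
      rewrite exp_plus. apply Rmult_le_compat; try apply Cnorm_ge0. exact IHm0.
      eapply Rle_trans. apply Cnorm_sub. rewrite Cnorm_one, Cnorm_mul, Cnorm_pow.
      apply exp_ineq1_le. }
  eapply Rle_trans. apply G. apply exp_mono. unfold s.
  assert (0 < 1 - rp) by (unfold rp; lra).
  pose proof (pow_le rp m Hr).
  unfold Rdiv. apply Rmult_le_compat_r. left; apply Rinv_0_lt_compat; lra.
  assert (0 <= rp ^ m) by auto. nra.
Qed.

Lemma qpoch_B2 m k : Cnorm (Csub (qpoch a p (m + k)) (qpoch a p m)) <=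
   exp s * Cnorm a * (rp ^ m - rp ^ (m + k)) / (1 - rp).
Proof.
  pose proof rp_nonneg as Hr. pose proof (Cnorm_ge0 a) as Ha.
  assert (0 < 1 - rp) by (unfold rp; lra).
  induction k.
  - rewrite Nat.add_0_r. replace (Csub (qpoch a p m) (qpoch a p m)) with Czero by ring.
    replace (Cnorm Czero) with 0.
    replace (rp ^ m - rp ^ m) with 0 by ring. right. field. lra.
    unfold Cnorm; simpl. rewrite <- sqrt_0 at 1. f_equal. ring.
  - rewrite Nat.add_succ_r. eapply Rle_trans. apply (Cnorm_tri3 _ (qpoch a p (m + k))).
    rewrite qpoch_step. fold rp.
    replace (exp s * Cnorm a * (rp ^ m - rp ^ S (m + k)) / (1 - rp)) with
      (exp s * (Cnorm a * rp ^ (m + k)) + exp s * Cnorm a * (rp ^ m - rp ^ (m + k)) / (1 - rp))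
      by (simpl; field; lra).
    apply Rplus_le_compat. apply Rmult_le_compat_r.
    apply Rmult_le_pos; auto. apply pow_le; auto. apply qpoch_B1. exact IHk.
Qed.

Lemma qpoch_cv : exists l, Ccv (qpoch a p) l.
Proof.
  pose proof rp_nonneg as Hr. pose proof (Cnorm_ge0 a) as Ha.
  assert (0 < 1 - rp) by (unfold rp; lra).
  apply (Ccv_geom_cauchy _ (exp s * Cnorm a / (1 - rp)) rp). split; [exact Hr | exact hp].
  intros m k. eapply Rle_trans. apply qpoch_B2.
  unfold Rdiv. rewrite !Rmult_assoc. apply Rmult_le_compat_l. left; apply exp_pos.
  apply Rmult_le_compat_l. auto.
  pose proof (pow_le rp (m+k) Hr). pose proof (Rinv_0_lt_compat _ H). nra.
Qed.

Lemma qpoch_inf_spec : Ccv (qpoch a p) (qpoch_inf a p).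
Proof.
  destruct qpoch_cv as [l Hl]. replace (qpoch_inf a p) with l. exact Hl. symmetry. apply Clim_spec. exact Hl.
Qed.

Lemma qpoch_inf_near1 : Cnorm (Csub (qpoch_inf a p) Cone) <= exp s * s.
Proof.
  pose proof rp_nonneg as Hr. pose proof (Cnorm_ge0 a) as Ha.
  assert (0 < 1 - rp) by (unfold rp; lra).
  apply (Ccv_le_bound (qpoch a p)). apply qpoch_inf_spec.
  intro m. eapply Rle_trans. apply (qpoch_B2 0 m). simpl.
  unfold s. pose proof (pow_le rp m Hr). pose proof (Rinv_0_lt_compat _ H).
  pose proof (exp_pos (Cnorm a / (1 - rp))).
  unfold Rdiv. rewrite !Rmult_assoc. apply Rmult_le_compat_l. lra. apply Rmult_le_compat_l; auto. nra.
Qed.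
End B.

Lemma pow_le1 x n : 0 <= x <= 1 -> x ^ n <= 1.
Proof. intro H. induction n; simpl. lra. pose proof (pow_le x n ltac:(lra)). nra. Qed.

Lemma pow_dec x m n : 0 <= x <= 1 -> (m <= n)%nat -> x ^ n <= x ^ m.
Proof.
  intros H Hmn. replace n with (m + (n - m))%nat by lia. rewrite pow_add.
  pose proof (pow_le x m ltac:(lra)). pose proof (pow_le1 x (n - m) H). nra.
Qed.

Lemma Cnorm_Czero : Cnorm Czero = 0.
Proof. unfold Cnorm, Czero; simpl fst; simpl snd. replace (0 ^ 2 + 0 ^ 2) with 0 by ring. apply sqrt_0. Qed.

Lemma Cnorm_1sub x : 1 - Cnorm x <= Cnorm (Csub Cone x).
Proof.
  pose proof (Cnorm_add (Csub Cone x) x). replace (Cadd (Csub Cone x) x) with Cone in H by ring.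
  rewrite Cnorm_one in H. lra.
Qed.

Lemma qpoch_factor a p m k :
  qpoch a p (m + k) = Cmul (qpoch a p m) (qpoch (Cmul a (Cpow p m)) p k).
Proof.
  induction k.
  - rewrite Nat.add_0_r. simpl. ring.
  - rewrite Nat.add_succ_r. simpl. rewrite IHk, Cpow_add. ring.
Qed.

Lemma Ccv_shiftn u l m : Ccv u l -> Ccv (fun n => u (m + n)%nat) l.
Proof. intros H eps He. destruct (H eps He) as [N HN]. exists N. intros. apply HN; lia. Qed.

Lemma qpoch_inf_factor a p m : Cnorm p < 1 ->
  qpoch_inf a p = Cmul (qpoch a p m) (qpoch_inf (Cmul a (Cpow p m)) p).
Proof.
  intro hp. apply (Ccv_unique (fun n => qpoch a p (m + n)%nat)).
  - apply Ccv_shiftn. apply qpoch_inf_spec; auto.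
  - apply (Ccv_ext (fun n => Cmul (qpoch a p m) (qpoch (Cmul a (Cpow p m)) p n))).
    intro n. symmetry. apply qpoch_factor.
    apply Ccv_scal. apply qpoch_inf_spec; auto.
Qed.

Lemma Ccv_of_bound u l K rho : 0 <= rho < 1 ->
  (forall n, Cnorm (Csub (u n) l) <= K * rho ^ n) -> Ccv u l.
Proof.
  intros Hr Hb eps He.
  destruct (pow_lt_1_zero rho ltac:(rewrite Rabs_right; lra) (eps / (Rabs K + 1)))
      as [N HN]. apply Rdiv_lt_0_compat; pose proof (Rabs_pos K); lra.
  exists N. intros n Hn. specialize (HN n Hn). specialize (Hb n).
  rewrite Rabs_right in HN by (apply Rle_ge, pow_le; lra).
  pose proof (Rabs_pos K). pose proof (pow_le rho n ltac:(lra)).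
  eapply Rle_lt_trans. apply Hb.
  apply Rle_lt_trans with (Rabs K * rho ^ n).
  apply Rmult_le_compat_r; auto. apply Rle_abs.
  apply Rle_lt_trans with ((Rabs K + 1) * rho ^ n). nra.
  apply Rmult_lt_reg_l with (/ (Rabs K + 1)). apply Rinv_0_lt_compat; lra.
  rewrite <- Rmult_assoc, Rinv_l by lra. unfold Rdiv in HN. lra.
Qed.

Section Main.
Variable q : Cx.
Hypothesis hq : Cnorm q < 1.
Let p := Cpow q 2.
Let r := Cnorm q.
Let T n := qpoch_inf (Copp (Cpow q (2 * n + 1))) p.
Let P n := qpoch (Copp p) p n.
Let Rn n := Cmul (P n) (T n).

Lemma r_bounds : 0 <= r < 1.
Proof. split. apply Cnorm_ge0. exact hq. Qed.

Lemma np : Cnorm p = r ^ 2.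
Proof. unfold p. apply Cnorm_pow. Qed.

Lemma np1 : Cnorm p < 1.
Proof. rewrite np. pose proof r_bounds. nra. Qed.

Lemma pow_p n : Cpow p n = Cpow q (2 * n).
Proof. unfold p. symmetry. apply Cpow_mul. Qed.

Lemma T_rec n : T n = Cmul (Csub Cone (Copp (Cpow q (2 * n + 1)))) (T (S n)).
Proof.
  unfold T. rewrite (qpoch_inf_factor _ p 1) by exact np1.
  f_equal. simpl. ring.
  f_equal. rewrite pow_p.
  replace (Cmul (Copp (Cpow q (2 * n + 1))) (Cpow q (2 * 1)))
    with (Copp (Cmul (Cpow q (2 * n + 1)) (Cpow q (2 * 1)))) by ring.
  rewrite <- Cpow_add. f_equal. f_equal. lia.
Qed.

Lemma key n : Cmul (Fod_ed_term q n) (Csub Cone q) = Cmul q (Csub (Rn n) (Rn (S n))).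
Proof.
  unfold Rn. rewrite (T_rec n). unfold Fod_ed_term. fold p.
  replace (2 * n + 3)%nat with (2 * S n + 1)%nat by lia. fold (T (S n)).
  unfold P. rewrite qpoch_S. fold (P n).
  rewrite pow_p.
  replace (2 * n + 1)%nat with (S (2 * n)) by lia.
  replace (2 * n + 2)%nat with (S (S (2 * n))) by lia.
  unfold p. simpl Cpow at 1 2 4. 
  simpl. ring.
Qed.

Lemma sum_rel N : Cmul (Csum (Fod_ed_term q) N) (Csub Cone q) = Cmul q (Csub (Rn 0) (Rn N)).
Proof.
  induction N. simpl. ring.
  simpl. replace (Cmul (Cadd (Csum (Fod_ed_term q) N) (Fod_ed_term q N)) (Csub Cone q))
    with (Cadd (Cmul (Csum (Fod_ed_term q) N) (Csub Cone q)) (Cmul (Fod_ed_term q N) (Csub Cone q)))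
    by ring.
  rewrite IHN, key. ring.
Qed.

Lemma R0A : Rn 0 = qpoch_inf (Copp q) p.
Proof.
  unfold Rn, P, T. simpl qpoch. replace (Cpow q (2 * 0 + 1)) with q. ring.
  simpl. ring.
Qed.

Lemma T_near n : Cnorm (Csub (T n) Cone) <= exp (1 / (1 - r ^ 2)) * (1 / (1 - r ^ 2)) * r ^ n.
Proof.
  pose proof r_bounds as Hr.
  assert (H1 : 0 < 1 - r ^ 2) by nra.
  unfold T. eapply Rle_trans. apply qpoch_inf_near1. exact np1.
  rewrite Cnorm_opp, Cnorm_pow, np. fold r.
  assert (Hp : r ^ (2 * n + 1) <= r ^ n) by (apply pow_dec; lia || lra).
  assert (Hp1 : r ^ n <= 1) by (apply pow_le1; lra).
  pose proof (pow_le r (2 * n + 1) ltac:(lra)).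
  set (s := r ^ (2 * n + 1) / (1 - r ^ 2)).
  assert (Hs : s <= r ^ n / (1 - r ^ 2)).
  { unfold s, Rdiv. apply Rmult_le_compat_r. left; apply Rinv_0_lt_compat; lra. exact Hp. }
  assert (Hs0 : 0 <= s) by (unfold s, Rdiv; apply Rmult_le_pos; [lra | left; apply Rinv_0_lt_compat; lra]).
  assert (Hs1 : s <= 1 / (1 - r ^ 2)).
  { eapply Rle_trans. apply Hs. unfold Rdiv. apply Rmult_le_compat_r. left; apply Rinv_0_lt_compat; lra. lra. }
  pose proof (exp_mono _ _ Hs1). pose proof (exp_pos s).
  replace (exp (1 / (1 - r ^ 2)) * (1 / (1 - r ^ 2)) * r ^ n) with
    (exp (1 / (1 - r ^ 2)) * (r ^ n / (1 - r ^ 2))) by (field; lra).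
  apply Rmult_le_compat; lra.
Qed.

Lemma T_cv : Ccv T Cone.
Proof.
  apply (Ccv_of_bound _ _ (exp (1 / (1 - r ^ 2)) * (1 / (1 - r ^ 2))) r). apply r_bounds. apply T_near.
Qed.

Lemma R_cv : Ccv Rn (Cmul (qpoch_inf (Copp p) p) Cone).
Proof.
  apply Ccv_mul. apply qpoch_inf_spec. exact np1. apply T_cv.
Qed.

Lemma A_nonzero : qpoch_inf (Copp q) p <> Czero.
Proof.
  pose proof r_bounds as Hr.
  assert (H1 : 0 < 1 - r ^ 2) by nra.
  destruct (pow_lt_1_zero r ltac:(rewrite Rabs_right; lra) ((1 - r ^ 2) / 4)) as [J HJ].
  apply Rdiv_lt_0_compat; lra.
  specialize (HJ J (le_n J)). rewrite Rabs_right in HJ by (apply Rle_ge, pow_le; lra).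
  assert (HT : Cnorm (Csub (T J) Cone) <= 3 / 4).
  { unfold T. eapply Rle_trans. apply qpoch_inf_near1. exact np1.
    rewrite Cnorm_opp, Cnorm_pow, np. fold r.
    assert (Hp : r ^ (2 * J + 1) <= r ^ J) by (apply pow_dec; lia || lra).
    pose proof (pow_le r (2 * J + 1) ltac:(lra)).
    set (s := r ^ (2 * J + 1) / (1 - r ^ 2)).
    assert (Hs : s <= 1 / 4).
    { unfold s. apply Rmult_le_reg_r with (1 - r ^ 2). lra.
      unfold Rdiv. rewrite Rmult_assoc, Rinv_l by lra. lra. }
    assert (Hs0 : 0 <= s) by (unfold s, Rdiv; apply Rmult_le_pos; [lra | left; apply Rinv_0_lt_compat; lra]).
    pose proof (exp_mono _ _ (ltac:(lra) : s <= 1)). pose proof exp_le_3.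
    pose proof (exp_pos s). nra. }
  assert (HTn : 0 < Cnorm (T J)).
  { pose proof (Cnorm_add (Csub (T J) Cone) (Copp (T J))).
    replace (Cadd (Csub (T J) Cone) (Copp (T J))) with (Copp Cone) in H by ring.
    rewrite !Cnorm_opp, Cnorm_one in H. lra. }
  assert (HO : forall m, 0 < Cnorm (qpoch (Copp q) p m)).
  { induction m. simpl. rewrite Cnorm_one. lra.
    rewrite qpoch_S, Cnorm_mul. apply Rmult_lt_0_compat. auto.
    eapply Rlt_le_trans; [|apply Cnorm_1sub].
    rewrite Cnorm_mul, Cnorm_opp, Cnorm_pow, np. fold r.
    assert ((r ^ 2) ^ m <= 1) by (apply pow_le1; nra). pose proof (pow_le (r ^ 2) m ltac:(nra)).
    nra. }
  rewrite (qpoch_inf_factor _ p J np1).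
  replace (qpoch_inf (Cmul (Copp q) (Cpow p J)) p) with (T J).
  intro E. assert (Cnorm (Cmul (qpoch (Copp q) p J) (T J)) = 0) by (rewrite E; apply Cnorm_Czero).
  rewrite Cnorm_mul in H. specialize (HO J). nra.
  unfold T. f_equal. rewrite pow_p.
  replace (Cmul (Copp q) (Cpow q (2 * J))) with (Copp (Cmul (Cpow q 1) (Cpow q (2 * J)))) by (simpl; ring).
  rewrite <- Cpow_add. f_equal. f_equal. lia.
Qed.

End Main.

Theorem theorem1p1 (q : Cx) (hq : Cnorm q < 1) :
  Ccv (fun N => Csum (Fod_ed_term q) N)
      (Cmul (Cdiv (Cmul q (qpoch_inf (Copp q) (Cpow q 2))) (Csub Cone q))
            (Csub Cone (Cdiv (qpoch_inf (Copp (Cpow q 2)) (Cpow q 2))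
                           (qpoch_inf (Copp q) (Cpow q 2))))).
Proof.
  pose proof (R_cv q hq) as HR. pose proof (sum_rel q hq) as HS. pose proof (R0A q) as H0.
  pose proof (A_nonzero q hq) as HA. cbv zeta in HR, HS, H0.
  set (Rn := fun n => Cmul (qpoch (Copp (Cpow q 2)) (Cpow q 2) n)
          (qpoch_inf (Copp (Cpow q (2 * n + 1))) (Cpow q 2))) in *.
  set (A := qpoch_inf (Copp q) (Cpow q 2)) in *.
  set (B := qpoch_inf (Copp (Cpow q 2)) (Cpow q 2)) in *.
  assert (Hne : Csub Cone q <> Czero).
  { intro E. pose proof (Cnorm_1sub q). rewrite E, Cnorm_Czero in H. lra. }
  pose proof (Cinv_r _ Hne) as Hc. pose proof (Cinv_r _ HA) as Ha.
  set (c := Cinv (Csub Cone q)) in *.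
  apply (Ccv_ext (fun N => Cmul (Cmul q c) (Csub A (Rn N)))).
  - intro N. specialize (HS N). rewrite H0 in HS.
    symmetry.
    transitivity (Cmul (Csum (Fod_ed_term q) N) (Cmul (Csub Cone q) c)).
    rewrite Hc; ring.
    replace (Cmul (Csum (Fod_ed_term q) N) (Cmul (Csub Cone q) c))
      with (Cmul (Cmul (Csum (Fod_ed_term q) N) (Csub Cone q)) c) by ring.
    rewrite HS. ring.
  - replace (Cmul (Cdiv (Cmul q A) (Csub Cone q)) (Csub Cone (Cdiv B A)))
      with (Cmul (Cmul q c) (Csub A (Cmul B Cone))).
    apply Ccv_scal. apply Ccv_csub. exact HR.
    unfold Cdiv. fold c.
    transitivity (Cmul (Cmul q c) (Csub A (Cmul B (Cmul A (Cinv A))))).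
    rewrite Ha. reflexivity. ring.
Qed.
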